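(* Let $\rho\colon\mathcal{F}\to[\Lambda]^\omega$ with $\mathcal{F}\subseteq[\Omega]^\omega$ be any partition regular function. Then the following are equivalent: (1) $\mathrm{FinBW}(\rho)$ coincides with the class of all compact metric spaces in the realm of metric spaces, i.e. a metric space belongs to $\mathrm{FinBW}(\rho)$ if and only if it is compact; (2) $[0,1]\in\mathrm{FinBW}(\rho)$; (3) $\rho^{[0,1]}\not\leq_K\rho$ (for any choice of almost disjoint family and enumeration in the definition of $\rho^{[0,1]}$).
   Context: All topological spaces are Hausdorff. Partition regular function: $\Lambda,\Omega$ countably infinite, $\mathcal{F}$ a nonempty family of infinite subsets of $\Omega$ with $F\setminus K\in\mathcal{F}$ for $F\in\mathcal{F}$, $K$ finite; $\rho\colon\mathcal{F}\to[\Lambda]^\omega$ is partition regular if (M) $E\subseteq F\Rightarrow\rho(E)\subseteq\rho(F)$; (R) if $F\in\mathcal{F}$ and $\rho(F)=A\cup B$ then some $E\in\mathcal{F}$ has $\rho(E)\subseteq A$ or $\rho(E)\subseteq B$; (S) for every $E\in\mathcal{F}$ there is $F\in\mathcal{F}$, $F\subseteq E$, such that every $a\in\rho(F)$ satisfies $a\notin\rho(F\setminus K)$ for some finite $K\subseteq\Omega$. $\rho$-convergence and $\mathrm{FinBW}(\rho)$: $f\restriction\rho(F)$ ($f\colon\Lambda\to Y$, $F\in\mathcal{F}$) $\rho$-converges to $y$ if for every neighborhood $U$ of $y$ some finite $K\subseteq\Omega$ has $f[\rho(F\setminus K)]\subseteq U$; $\mathrm{FinBW}(\rho)$ is the class of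 spaces $Y$ such that for every $f\colon\Lambda\to Y$ some $F\in\mathcal{F}$ makes $f\restriction\rho(F)$ $\rho$-convergent to a point of $Y$. Katětov order: $\rho_2\leq_K\rho_1$ if there is $f\colon\Lambda_1\to\Lambda_2$ such that for every $F_1\in\mathcal{F}_1$ there is $F_2\in\mathcal{F}_2$ such that for every finite $K_1\subseteq\Omega_1$ there is a finite $K_2\subseteq\Omega_2$ with $\rho_2(F_2\setminus K_2)\subseteq f[\rho_1(F_1\setminus K_1)]$. $\mathrm{conv}$ is the ideal on $\mathbb{Q}\cap[0,1]$ of sets covered by the ranges of finitely many sequences in $\mathbb{Q}\cap[0,1]$ convergent in $[0,1]$. Definition of $\rho^{[0,1]}$: let $\mathcal{A}=\{A_\alpha:\alpha<\mathfrak{c}\}$ be an almost disjoint family on $\omega$ (pairwise distinct infinite subsets with pairwise finite intersections). Let $X$ be the set of all $x\colon\omega\times\omega\to[0,1]\cap\mathbb{Q}$ such that: (i) for every $p\in[0,1]$ there is an open neighborhood $U$ of $p$ with $x[(\omega\setminus[0,n])\times\omega]\not\subseteq U$ for all $n$; (ii) $x$ is injective; (iii) $x[(\omega\setminus[0,n])\times\omega]\notin\mathrm{conv}$ for all $n$. Fix an enumeration $X=\{x_\alpha:\alpha<\mathfrak{c}\}$. Let $\overline{\mathcal{A}}=\{A\setminus K:A\in\mathcal{A},K\in[\omega]^{<\omega}\}$ and $\rho^{[0,1]}\colon\overline{\mathcal{A}}\to[[0,1]\cap\mathbb{Q}]^\omega$, $\rho^{[0,1]}(A_\alpha\setminus K)=x_\alpha[(\omega\setminus[0,\max(A_\alpha\cap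 K)])\times\omega]$, with $\max\emptyset=0$; here $[0,m]=\{0,\dots,m\}$. (This is a partition regular function with $\Omega=\omega$, $\Lambda=\mathbb{Q}\cap[0,1]$.) *)

(* Defs.v *)
From HB Require Import structures.
From mathcomp Require Import all_boot all_order all_algebra.
From mathcomp Require Import all_classical all_reals all_analysis.
Import Order.TTheory GRing.Theory Num.Theory.
Import numFieldNormedType.Exports.
Set Implicit Arguments.
Unset Strict Implicit.
Unset Printing Implicit Defensive.
Local Open Scope classical_set_scope.
Local Open Scope ring_scope.

Definition countably_infinite (T : Type) : Prop := ([set: T] #= [set: nat])%card.

(* rho : FF -> [Lambda]^omega is a partition regular function
   (rho is a total function on sets, only its values on FF matter). *)
Definition partition_regular (Omega Lambda : Type)
    (FF : set (set Omega)) (rho : set Omega -> set Lambda) : Prop :=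
  [/\ FF !=set0,
      (forall F, FF F -> infinite_set F),
      (forall F K, FF F -> finite_set K -> FF (F `\` K)) &
      (forall F, FF F -> infinite_set (rho F))] /\
  [/\
      (forall E F, FF E -> FF F -> E `<=` F -> rho E `<=` rho F),
      (forall F (A B : set Lambda), FF F -> rho F = A `|` B ->
         exists2 E, FF E & (rho E `<=` A \/ rho E `<=` B))
    &
      (forall E, FF E -> exists2 F, FF F &
         (F `<=` E /\ forall a, rho F a ->
            exists K : set Omega, finite_set K /\ ~ rho (F `\` K) a))].

Definition rho_converges (Omega Lambda : Type) (Y : topologicalType)
    (rho : set Omega -> set Lambda) (f : Lambda -> Y) (F : set Omega) (y : Y)
    : Prop :=
  forall U : set Y, nbhs y U ->
    exists K : set Omega, finite_set K /\ f @` rho (F `\` K) `<=` U.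

Definition FinBW_on (Omega Lambda : Type) (FF : set (set Omega))
    (rho : set Omega -> set Lambda) (Y : topologicalType) (A : set Y) : Prop :=
  forall f : Lambda -> Y, (forall l, A (f l)) ->
    exists2 F, FF F & exists2 y, A y & rho_converges rho f F y.

Definition FinBW (Omega Lambda : Type) (FF : set (set Omega))
    (rho : set Omega -> set Lambda) (Y : topologicalType) : Prop :=
  FinBW_on FF rho [set: Y].

Definition katetov_le (O2 L2 O1 L1 : Type)
    (FF2 : set (set O2)) (rho2 : set O2 -> set L2)
    (FF1 : set (set O1)) (rho1 : set O1 -> set L1) : Prop :=
  exists f : L1 -> L2, forall F1, FF1 F1 ->
    exists2 F2, FF2 F2 & forall K1 : set O1, finite_set K1 ->
      exists K2 : set O2, finite_set K2 /\
        rho2 (F2 `\` K2) `<=` f @` rho1 (F1 `\` K1).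

Definition Q01 := {q : rat | (0 <= q <= 1)%R}.
Definition q01r (R : realType) (q : Q01) : R := ratr (val q).

(* the ideal conv on Q cap [0,1]: sets covered by the ranges of finitely
   many sequences in Q cap [0,1] convergent (in [0,1], equivalently in R,
   since [0,1] is closed) *)
Definition conv (R : realType) (S : set Q01) : Prop :=
  exists (k : nat) (s : 'I_k -> nat -> Q01),
    (forall i, exists l : R, (fun n => q01r R (s i n)) @ \oo --> l) /\
    (forall q, S q -> exists i n, s i n = q).

Definition tail_rows (n : nat) : set (nat * nat) := [set m | (n < m.1)%N].

(* conditions (i),(ii),(iii) defining X *)
Definition goodX (R : realType) (x : nat * nat -> Q01) : Prop :=
  [/\ (forall p : R, 0 <= p <= 1 ->
         exists U : set R, [/\ open U, U p &
           forall n, ~ ((q01r R \o x) @` tail_rows n `<=` U)]),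
      injective x
    & forall n, ~ conv R (x @` tail_rows n)].

Definition Xset (R : realType) := {x : nat * nat -> Q01 | goodX R x}.

(* an almost disjoint family indexed (injectively) by I; the indexing by X
   encodes the pairing A_alpha <-> x_alpha of the two enumerations *)
Definition almost_disjoint (I : Type) (A : I -> set nat) : Prop :=
  [/\ injective A, (forall i, infinite_set (A i)) &
      forall i j, i <> j -> finite_set (A i `&` A j)].

(* n lies in omega \ [0, max S]  with max emptyset = 0 *)
Definition above_max (S : set nat) (n : nat) : Prop :=
  (0 < n)%N /\ forall k, S k -> (k < n)%N.

Definition Fbar (R : realType) (A : Xset R -> set nat) : set (set nat) :=
  [set B | exists x K, finite_set K /\ B = A x `\` K].

Definition rho01 (R : realType) (A : Xset R -> set nat) (B : set nat)
    : set Q01 :=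
  [set q | exists x K, [/\ finite_set K, B = A x `\` K &
     exists m, above_max (A x `&` K) m.1 /\ proj1_sig x m = q]].

(* Main.v *)
Require Import Defs.
From HB Require Import structures.
From mathcomp Require Import all_boot all_order all_algebra.
From mathcomp Require Import all_classical all_reals all_analysis.
From mathcomp Require Import ring lra zify.
From Stdlib Require Import Lia.
Import Order.TTheory GRing.Theory Num.Theory.
Import numFieldNormedType.Exports.
Set Implicit Arguments.
Unset Strict Implicit.
Unset Printing Implicit Defensive.
Local Open Scope classical_set_scope.
Local Open Scope ring_scope.

Lemma fin_nat_bound (S : set nat) : finite_set S ->
  exists n, forall k, S k -> (k <= n)%N.
Proof.
move=> /finite_fsetP [X ->]; exists (\max_(i <- finmap.enum_fset X) i)%N => k Xk.
by apply: (@leq_bigmax_seq _ _ xpredT (fun i => i)).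
Qed.

Lemma q01r_01 (R : realType) (q : Q01) : 0 <= q01r R q <= 1.
Proof.
case: q => r rp; have /andP[q0 q1] := rp; rewrite /q01r /=.
by rewrite ler0q q0 /= -(rmorph1 (@ratr R)) ler_rat.
Qed.

Lemma small_inv (R : realType) (d : R) : 0 < d -> exists J, forall j, (J <= j)%N ->
  2 * (j.+1%:R)^-1 < d.
Proof.
move=> d0; have h0 : 0 <= 2 / d by rewrite divr_ge0 // ltW.
have /andP[_ t2] := truncn_itv h0.
exists (Num.truncn (2 / d)) => j Jj.
have jl : 2 / d < j.+1%:R.
  by apply: lt_le_trans t2 _; rewrite ler_nat ltnS.
have j0 : 0 < (j.+1%:R : R) by rewrite ltr0n.
by rewrite ltr_pdivrMr //; move: jl; rewrite ltr_pdivrMr // mulrC.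
Qed.

Lemma ballR (R : realType) (x y e : R) : ball x e y = (`|x - y| < e).
Proof. by rewrite -ball_normE. Qed.

Definition dyk (R : realType) (n : nat) (y : R) : nat :=
  minn (Num.truncn (y * (2 ^ n.+1)%:R)) (2 ^ n.+1).-1.
Definition dy (R : realType) (n : nat) (y : R) : rat :=
  ((dyk n y).*2.+1)%:R / (2 ^ n.+2)%:R.

Lemma dy01 (R : realType) n (y : R) : 0 <= dy n y <= 1.
Proof.
rewrite /dy divr_ge0 //= ler_pdivrMr ?ltr0n ?expn_gt0 // mul1r ler_nat.
have hk : (dyk n y <= (2 ^ n.+1).-1)%N by rewrite /dyk geq_minr.
have hM : (0 < 2 ^ n.+1)%N by rewrite expn_gt0.
rewrite [(2 ^ n.+2)%N]expnS -muln2; move: hk hM.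
move: (2 ^ n.+1)%N (dyk n y) => a b; lia.
Qed.


Lemma dy_aux a b n d : (a.*2.+1 * 2 ^ (n + d.+1) = b.*2.+1 * 2 ^ n)%N -> False.
Proof.
rewrite expnD mulnCA [(b.*2.+1 * _)%N]mulnC => /eqP.
rewrite eqn_pmul2l ?expn_gt0 // => /eqP /(congr1 odd).
by rewrite oddM oddX /= ?odd_double ?andbF.
Qed.

Lemma dy_inj (R : realType) n n' (y y' : R) : dy n y = dy n' y' -> n = n'.
Proof.
rewrite /dy => /eqP; rewrite eqr_div ?pnatr_eq0 ?expn_eq0 // -!natrM eqr_nat.
move=> /eqP H; case: (ltngtP n n') => // nn'.
  have e : (n'.+2 = n.+2 + (n' - n).-1.+1)%N by rewrite prednK ?subn_gt0 //; lia.
  by move: H; rewrite e => /dy_aux.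
have e : (n.+2 = n'.+2 + (n - n').-1.+1)%N by rewrite prednK ?subn_gt0 //; lia.
by move: H; rewrite e => /esym/dy_aux.
Qed.

Lemma trunc_bounds (R : realType) (M : nat) (y : R) : (0 < M)%N -> 0 <= y <= 1 ->
  (minn (Num.truncn (y * M%:R)) M.-1)%:R <= y * M%:R /\
  y * M%:R <= (minn (Num.truncn (y * M%:R)) M.-1).+1%:R.
Proof.
move=> M0 /andP[y0 y1].
have yM0 : 0 <= y * M%:R by rewrite mulr_ge0.
have /andP[t1 t2] := truncn_itv yM0.
have yMM : y * M%:R <= M%:R by rewrite ler_piMl.
case: (leqP (Num.truncn (y * M%:R)) M.-1) => tM.
  by split => //; apply: ltW.
rewrite prednK //; split => //.
by apply: le_trans t1; rewrite ler_nat; apply: ltnW.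
Qed.

Lemma dy_approx (R : realType) n (y : R) : 0 <= y <= 1 ->
  `|ratr (dy n y) - y| <= (n.+1%:R)^-1.
Proof.
move=> y01.
have M0 : (0 < 2 ^ n.+1)%N by rewrite expn_gt0.
have [lo hi] := trunc_bounds M0 y01.
rewrite /dy /dyk; move: lo hi.
set k := minn _ _.
have -> : (2 ^ n.+2 = 2 * 2 ^ n.+1)%N by rewrite expnS.
have nM : (n.+1 < 2 * 2 ^ n.+1)%N.
  have := ltn_expl n.+1 (isT : 1 < 2)%N; lia.
move: nM M0; move: (2 ^ n.+1)%N k => M k nM M0 lo hi.
rewrite fmorph_div /= !ratr_nat.
have Mr : 0 < (M%:R : R) by rewrite ltr0n.
rewrite -addn1 natrD in hi.
have -> : (k.*2.+1)%:R / (2 * M)%:R - y =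
    (k%:R + 2^-1 - y * M%:R) * (M%:R : R)^-1.
  rewrite natrM -[(k.*2.+1)%N]addn1 natrD -muln2 natrM.
  field; rewrite pnatr_eq0 -lt0n //.
have Mi : 0 < (M%:R : R)^-1 by rewrite invr_gt0.
rewrite normrM (gtr0_norm Mi).
have h1 : `|k%:R + 2^-1 - y * M%:R| <= 2^-1 :> R.
  rewrite ler_norml; apply/andP; split; lra.
apply: le_trans (ler_wpM2r (ltW Mi) h1) _.
rewrite -invfM -natrM mul2n lef_pV2 ?posrE ?ltr0n // ?double_gt0 //.
by rewrite ler_nat -mul2n ltnW.
Qed.

Lemma cantor_prefix (b : cantor_space) (n : nat) :
  \forall c \near b, forall i, (i < n)%N -> b i = c i.
Proof.
elim: n => [|n IH]; first by near=> z => ?; rewrite ltn0.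
near=> z => i; rewrite leq_eqVlt => /predU1P[|iSn]; last by rewrite (near IH z).
move=> [->]; near: z; exists (proj n @^-1` [set b n]).
split => //; suff : @open cantor_space (proj n @^-1` [set b n]) by [].
apply: open_comp; [move=> + _; exact: proj_continuous| apply: discrete_open].
Unshelve. all: end_near. Qed.

Section Tern.
Variable R : realType.

Definition tw (i : nat) : R := 2 / 3 ^+ i.+1.
Definition tS (s : cantor_space) (n : nat) : R :=
  \sum_(0 <= i < n) (if s i then tw i else 0).

Lemma geom n m : \sum_(n <= i < n + m) tw i = (3 ^+ n)^-1 - (3 ^+ (n + m))^-1.
Proof.
elim: m => [|m IH]; first by rewrite addn0 big_geq // subrr.
rewrite addnS big_nat_recr ?leq_addr //= IH /tw exprS.
have h3 : (3 : R) != 0 by rewrite pnatr_eq0.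
have h3n : (3 ^+ (n + m) : R) != 0 by rewrite expf_neq0.
have h3n' : (3 ^+ n : R) != 0 by rewrite expf_neq0.
by field; rewrite h3n h3n'.
Qed.

Lemma tS_split s n m : tS s (n + m) =
  tS s n + \sum_(n <= i < n + m) (if s i then tw i else 0).
Proof. by rewrite /tS (@big_cat_nat _ _ _ n) // leq_addr. Qed.

Lemma tail_bounds s n m :
  0 <= \sum_(n <= i < n + m) (if s i then tw i else 0) <= (3 ^+ n)^-1.
Proof.
apply/andP; split.
  by apply: sumr_ge0 => i _; case: (s i) => //; rewrite /tw divr_ge0 // exprn_ge0.
apply: le_trans (_ : \sum_(n <= i < n + m) tw i <= _).
  apply: ler_sum => i _; case: (s i) => //.
  by rewrite /tw divr_ge0 // exprn_ge0.
by rewrite geom gerBl invr_ge0 exprn_ge0.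
Qed.

Lemma tS_mono s n n' : (n <= n')%N -> tS s n <= tS s n'.
Proof.
move=> nn'; rewrite -(subnKC nn') tS_split lerDl.
by have /andP[] := tail_bounds s n (n' - n).
Qed.

Lemma tS_le s n n' : tS s n' <= tS s n + (3 ^+ n)^-1.
Proof.
have [nn'|n'n] := leqP n n'.
  rewrite -(subnKC nn') tS_split lerD2l.
  by have /andP[] := tail_bounds s n (n' - n).
apply: le_trans (tS_mono s (ltnW n'n)) _.
by rewrite lerDl invr_ge0 exprn_ge0.
Qed.

Definition tern (s : cantor_space) : R := sup (range (tS s)).

Lemma tern_has_sup s : has_sup (range (tS s)).
Proof.
split; first by exists (tS s 0); exists 0%N.
exists (tS s 0 + 1) => _ [n _ <-]; have := tS_le s 0 n; by rewrite expr0 invr1.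
Qed.

Lemma tern_ge s n : tS s n <= tern s.
Proof. by apply: sup_upper_bound; [exact: tern_has_sup|exists n]. Qed.

Lemma tern_le s n : tern s <= tS s n + (3 ^+ n)^-1.
Proof.
apply: ge_sup; first by exists (tS s 0); exists 0%N.
by move=> _ [n' _ <-]; apply: tS_le.
Qed.

Lemma tern01 s : 0 <= tern s <= 1.
Proof.
have h1 := tern_ge s 0; have h2 := tern_le s 0.
rewrite /tS big_geq // in h1 h2; rewrite expr0 invr1 add0r in h2.
by apply/andP.
Qed.

Lemma tS_prefix s t n : (forall i, (i < n)%N -> s i = t i) -> tS s n = tS t n.
Proof. by move=> H; apply: eq_big_nat => i /andP[_ /H ->]. Qed.

Lemma tern_close s t n : (forall i, (i < n)%N -> s i = t i) ->
  `|tern s - tern t| <= (3 ^+ n)^-1.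
Proof.
move=> H; have e := tS_prefix H.
have h1 := tern_ge s n; have h2 := tern_le s n.
have h3 := tern_ge t n; have h4 := tern_le t n.
rewrite e in h1 h2; rewrite ler_norml; apply/andP; split; lra.
Qed.

Lemma pow3_small (e : R) : 0 < e -> exists n, (3 ^+ n)^-1 < e :> R.
Proof.
move=> e0; have [J HJ] := small_inv e0.
exists J; have h := HJ J (leqnn J).
have h1 : (3 ^+ J)^-1 <= (J.+1%:R)^-1 :> R.
  rewrite lef_pV2 ?posrE ?exprn_gt0 ?ltr0n // -natrX ler_nat.
  exact: ltn_expl.
have h2 : 0 <= (J.+1%:R)^-1 :> R by rewrite invr_ge0.
apply: le_lt_trans h1 _; apply: le_lt_trans _ h.
by rewrite -[X in X <= _]mul1r ler_wpM2r // ler1n.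
Qed.

Lemma tern_cont : continuous tern.
Proof.
move=> s V /nbhs_ballP [e /= e0 bV].
have [n hn] := pow3_small e0.
apply: filterS (cantor_prefix s n) => t H /=; apply: bV; rewrite ballR.
exact: le_lt_trans (tern_close H) hn.
Qed.

Lemma tS_S s n : tS s n.+1 = tS s n + (if s n then tw n else 0).
Proof. by rewrite /tS big_nat_recr. Qed.

Lemma tern_sep s t d : (forall i, (i < d)%N -> s i = t i) -> s d = true -> t d = false ->
  tern t < tern s.
Proof.
move=> H sd td.
have h1 := tern_ge s d.+1; have h2 := tern_le t d.+1.
rewrite tS_S sd in h1; rewrite tS_S td addr0 -(tS_prefix H) in h2.
apply: le_lt_trans h2 _; apply: lt_le_trans h1; rewrite ltrD2l /tw.
rewrite -[X in X < _]mul1r ltr_pM2r ?ltr1n // invr_gt0 exprn_gt0 //.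
Qed.

Lemma tern_inj : injective tern.
Proof.
move=> s t e; apply: contrapT => ne.
have hd : exists d, s d != t d.
  apply: contrapT => H; apply: ne; apply: functional_extensionality_dep => d.
  by apply/eqP; apply: contrapT => /negP h; apply: H; exists d.
case: (ex_minnP hd) => d sd dmin.
have pre i : (i < d)%N -> s i = t i.
  move=> id; apply/eqP; apply: contrapT => /negP h.
  by have := dmin i h; rewrite leqNgt id.
move: sd; case sdE: (s d); case tdE: (t d) => // _.
- by have := tern_sep pre sdE tdE; rewrite e ltxx.
- have pre' i : (i < d)%N -> t i = s i by move=> /pre ->.
  by have := tern_sep pre' tdE sdE; rewrite e ltxx.
Qed.

End Tern.

Definition pointed_of (T : Type) (t : T) : Type := T.
HB.instance Definition _ (R : realType) (Y : pseudoMetricType R) (y : Y) :=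
  PseudoMetric.on (pointed_of y).
HB.instance Definition _ (R : realType) (Y : pseudoMetricType R) (y : Y) :=
  isPointed.Build (pointed_of y) y.

Lemma cantor_surj_Y (R : realType) (Y : pseudoMetricType R) (y : Y) :
  compact [set: Y] -> hausdorff_space Y ->
  exists p : cantor_space -> Y, continuous p /\ forall z : Y, exists c, p c = z.
Proof.
move=> cY hY.
have [p cp] := @cantor_surj R (pointed_of y) cY hY.
exists p; split => // z.
have [c _ <-] := (@surj _ _ _ _ p) z I.
by exists c.
Qed.

Section AD.
Variable R : realType.

Definition phiX (x : Xset R) (k : nat) : nat :=
  if pickle_inv k is Some p then pickle (proj1_sig x p) else 0%N.

Lemma phiX_inj : injective phiX.
Proof.
move=> [x hx] [y hy] e.
have exy : x = y.
  apply: funext => p; have := congr1 (fun g => g (pickle p)) e.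
  rewrite /phiX /= pickleK_inv; exact: (pcan_inj (@pickleK _)).
subst y; congr exist; exact: Prop_irrelevance.
Qed.

Definition ADf (x : Xset R) : set nat := range (fun n => pickle (mkseq (phiX x) n)).

Lemma mk_inj (g : nat -> nat) : injective (fun n => pickle (mkseq g n)).
Proof. by move=> a b /(pcan_inj (@pickleK _)) /(congr1 size); rewrite !size_mkseq. Qed.

Lemma ADf_inf x : infinite_set (ADf x).
Proof.
move=> fin; apply: infinite_nat.
have -> : [set: nat] = (fun n => pickle (mkseq (phiX x) n)) @^-1` ADf x.
  by apply/seteqP; split => // n _; exists n.
by apply: finite_preimage => // a b _ _; apply: mk_inj.
Qed.

Lemma ADf_fin x y : x <> y -> finite_set (ADf x `&` ADf y).
Proof.
move=> xy.
have [d hd] : exists d, phiX x d <> phiX y d.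
  apply: contrapT => H; apply: xy; apply: phiX_inj; apply: funext => d.
  by apply: contrapT => h; apply: H; exists d.
apply: (@sub_finite_set _ _ ((fun n => pickle (mkseq (phiX x) n)) @` `I_d.+1)); last first.
  exact: finite_image.
move=> _ [[n _ <-] [n' _ e]].
exists n => //=; rewrite ltnS leqNgt; apply/negP => dn.
have := pcan_inj (@pickleK _) e.
move=> e'; have := congr1 size e'; rewrite !size_mkseq => nn; subst n'.
have := congr1 (fun s => nth 0%N s d) e'; rewrite !nth_mkseq //.
by move=> /esym.
Qed.

Lemma ADf_ad : almost_disjoint ADf.
Proof.
split; [|exact: ADf_inf|exact: ADf_fin].
move=> x y e; apply: contrapT => xy; have := ADf_fin xy.
by rewrite e setIid; apply: ADf_inf.
Qed.

End AD.

Section PartA.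
Variables (R : realType) (Omega Lambda : Type)
    (FF : set (set Omega)) (rho : set Omega -> set Lambda).

Lemma partA : FinBW_on FF rho [set x : R | 0 <= x <= 1] ->
  forall A : Xset R -> set nat, almost_disjoint A ->
          ~ katetov_le (Fbar A) (rho01 A) FF rho.
Proof.
move=> bw A _ [g Hg].
have [F1 FF1 [y y01 cv]] := bw (fun l => q01r R (g l)) (fun l => q01r_01 R (g l)).
have [F2 [x [K [finK ->]]] H] := Hg F1 FF1.
have [gi _ _] := proj2_sig x.
have [U [oU Uy nU]] := gi y y01.
have [K1 [finK1 sub1]] := cv U (open_nbhs_nbhs (conj oU Uy)).
have [K2 [finK2 sub2]] := H K1 finK1.
have finKK : finite_set (A x `&` (K `|` K2)).
  by apply: finite_setIr; rewrite finite_setU.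
have [n bn] := fin_nat_bound finKK.
apply: (nU n) => _ [m /= nm <-].
have : rho01 A (A x `\` K `\` K2) (proj1_sig x m).
  exists x, (K `|` K2); split; first by rewrite finite_setU.
    by rewrite setDDl.
  exists m; split => //; split; first by apply: leq_ltn_trans nm.
  by move=> k /bn kn; apply: leq_ltn_trans nm.
move=> /sub2 [l rl <-]; apply: sub1; by exists l.
Qed.
End PartA.

Section Ctx.
Variables (R : realType) (Omega Lambda : Type)
    (FF : set (set Omega)) (rho : set Omega -> set Lambda).
Hypotheses (cO : countably_infinite Omega) (cL : countably_infinite Lambda)
  (PR : partition_regular FF rho).

Lemma FFD F K : FF F -> finite_set K -> FF (F `\` K).
Proof. by case: PR => -[_ _ H _] _; apply: H. Qed.
Lemma rhoM E F : FF E -> FF F -> E `<=` F -> rho E `<=` rho F.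
Proof. by case: PR => _ [H _ _]; apply: H. Qed.
Lemma rho_inf F : FF F -> infinite_set (rho F).
Proof. by case: PR => -[_ _ _ H] _; apply: H. Qed.
Lemma rhoR F (A B : set Lambda) : FF F -> rho F = A `|` B ->
         exists2 E, FF E & (rho E `<=` A \/ rho E `<=` B).
Proof. by case: PR => _ [_ H _]; apply: H. Qed.
Lemma rhoS E : FF E -> exists2 F, FF F &
         (F `<=` E /\ forall a, rho F a ->
            exists K : set Omega, finite_set K /\ ~ rho (F `\` K) a).
Proof. by case: PR => _ [_ _ H]; apply: H. Qed.
Lemma FFne : FF !=set0.
Proof. by case: PR => -[]. Qed.

Lemma FFDM F K : FF F -> finite_set K -> rho (F `\` K) `<=` rho F.
Proof. by move=> FFF fK; apply: rhoM; [exact: FFD|exact: FFF|move=> x []]. Qed.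

Definition eL : Lambda -> nat :=
  projT1 (cid (elimT card_set_bijP cL)).
Lemma eL_inj : injective eL.
Proof.
rewrite /eL; case: cid => f [_ fi _] /= a b fab.
by apply: fi => //; rewrite in_setT.
Qed.

Definition eO : Omega -> nat :=
  projT1 (cid (elimT card_set_bijP cO)).
Lemma eO_surj n : exists w, eO w = n.
Proof.
rewrite /eO; case: cid => f [_ _ fs] /=.
by have [w _ <-] := fs n I; exists w.
Qed.
Lemma eO_inj : injective eO.
Proof.
rewrite /eO; case: cid => f [_ fi _] /= a b fab.
by apply: fi => //; rewrite in_setT.
Qed.
Definition oO (n : nat) : Omega := projT1 (cid (eO_surj n)).
Lemma oOK w : oO (eO w) = w.
Proof. by apply: eO_inj; rewrite /oO; case: cid. Qed.

Definition Kn (m : nat) : set Omega := oO @` [set i | (i < m)%N].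
Lemma Kn_fin m : finite_set (Kn m).
Proof. exact: finite_image. Qed.
Lemma Kn_mono m m' : (m <= m')%N -> Kn m `<=` Kn m'.
Proof. by move=> mm' _ [i /= im <-]; exists i => //=; apply: leq_trans mm'. Qed.
Lemma fin_in_Kn K : finite_set K -> exists m, K `<=` Kn m.
Proof.
move=> fK; have [n bn] := fin_nat_bound (finite_image eO fK).
exists n.+1 => w Kw; exists (eO w); last exact: oOK.
by rewrite /= ltnS; apply: bn; exists w.
Qed.

Lemma inf_unbounded (P : set Lambda) : infinite_set P ->
  forall N, exists l, P l /\ (N <= eL l)%N.
Proof.
move=> iP N; apply: contrapT => H; apply: iP.
have sub : P `<=` eL @^-1` [set i | (i < N)%N].
  move=> l Pl /=; rewrite ltnNge; apply/negP => Nl; apply: H; by exists l.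
apply: sub_finite_set sub _; apply: finite_preimage => //.
by move=> a b _ _; apply: eL_inj.
Qed.

Definition TA (F : set Omega) := FF F /\
  forall N, exists m, forall l, rho (F `\` Kn m) l -> (N <= eL l)%N.

Lemma TA_ref E : FF E -> exists F, [/\ FF F, F `<=` E & TA F].
Proof.
move=> FFE; have [F FFF [FE HS]] := rhoS FFE.
have hK : forall a, exists K, finite_set K /\ (rho F a -> ~ rho (F `\` K) a).
  move=> a; have [/HS [K [fK nK]]|nF] := pselect (rho F a).
    by exists K.
  by exists set0; split; [exact: finite_set0|].
pose Kof a := projT1 (cid (hK a)).
have Kof_fin a : finite_set (Kof a) by rewrite /Kof; case: cid => K [].
have Kof_out a : rho F a -> ~ rho (F `\` Kof a) a by rewrite /Kof; case: cid => K [].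
pose Ln n : set Omega := if pselect (exists a, eL a = n) is left H
   then Kof (projT1 (cid H)) else set0.
have Ln_fin n : finite_set (Ln n).
  by rewrite /Ln; case: pselect => [H|_]; [exact: Kof_fin|exact: finite_set0].
have Ln_a a : Ln (eL a) = Kof a.
  rewrite /Ln; case: pselect => [H|[]]; last by exists a.
  by case: cid => b /= /eL_inj ->.
pose fix KK N : set Omega := if N is N'.+1 then KK N' `|` Ln N' else set0.
have KK_fin N : finite_set (KK N).
  elim: N => [|N IH] /=; [exact: finite_set0| by rewrite finite_setU].
have KK_sub N a : (eL a < N)%N -> Kof a `<=` KK N.
  elim: N => [//|N IH]; rewrite ltnS leq_eqVlt => /orP[/eqP <-|aN] /=.
    by rewrite Ln_a; apply: subsetUr.
  by apply: subset_trans (IH aN) _; apply: subsetUl.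
exists F; split => //; split => // N.
have [m Km] := fin_in_Kn (KK_fin N); exists m => l rl.
rewrite leqNgt; apply/negP => lN.
have rF : rho F l by apply: (FFDM FFF (Kn_fin m)).
apply: (Kof_out l rF); move: rl; apply: rhoM.
- exact: FFD (Kn_fin m).
- exact: FFD (Kof_fin l).
- by move=> w [Fw nw]; split => // Kw; apply: nw; apply: Km; exact: (KK_sub _ _ lN).
Qed.


Section PartB.
Variable f : Lambda -> R.
Hypothesis f01 : forall l, 0 <= f l <= 1.
Hypothesis fnc : forall F y, FF F -> 0 <= y <= 1 -> ~ rho_converges rho f F y.

Definition clus (P : set Lambda) (z : R) := forall eps, 0 < eps -> forall N,
  exists l, [/\ P l, (N <= eL l)%N & `|f l - z| < eps].

Lemma clus_mono P Q z : P `<=` Q -> clus P z -> clus Q z.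
Proof.
move=> PQ cP eps e0 N; have [l [Pl Nl fl]] := cP eps e0 N.
by exists l; split => //; apply: PQ.
Qed.


Lemma BW P : (forall N, exists l, P l /\ (N <= eL l)%N) ->
  exists z, 0 <= z <= 1 /\ clus P z.
Proof.
move=> Pu.
pose G := filter_from [set: nat] (fun N => [set l | P l /\ (N <= eL l)%N]).
have GF : ProperFilter G.
  apply: filter_from_proper; last first.
    by move=> N _; have [l [Pl Nl]] := Pu N; exists l.
  apply: filter_from_filter; first by exists 0%N.
  move=> i j _ _; exists (maxn i j) => // l [Pl]; rewrite geq_max => /andP[il jl].
  by split.
have G01 : (f @ G) `[0, 1]%classic.
  by exists 0%N => // l _ /=; rewrite in_itv /=; exact: f01.
have [z [z01 clz]] := segment_compact _ G01.
exists z; split; first by move: z01; rewrite /= in_itv.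
move=> eps e0 N.
have fA : (f @ G) (f @` [set l | P l /\ (N <= eL l)%N]).
  by exists N => // l Hl; exists l.
have [_ [[l [Pl Nl] <-] bz]] := clz _ _ fA (nbhsx_ballx z eps e0).
by exists l; split => //; rewrite distrC -ballR.
Qed.



Lemma unb_rho E : FF E -> forall N, exists l, rho E l /\ (N <= eL l)%N.
Proof. by move=> FFE; apply: inf_unbounded; apply: rho_inf. Qed.

Lemma single_clus E q : FF E -> (forall z, clus (rho E) z -> z = q) -> False.
Proof.
move=> FFE Hq; have [F [FFF FE [_ TAF]]] := TA_ref FFE.
have rFE : rho F `<=` rho E by apply: rhoM.
have [z [z01 cz]] := BW (unb_rho FFF).
have zq := Hq z (clus_mono rFE cz); subst z.
apply: (fnc FFF z01) => U /nbhs_ballP [eps /= e0 bU].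
pose P := [set l | rho F l /\ eps <= `|f l - q|].
have [Pu|Pb] := pselect (forall N, exists l, P l /\ (N <= eL l)%N).
  have [z [_ cPz]] := BW Pu.
  have zq : z = q by apply: Hq; apply: (clus_mono _ cPz) => l [/rFE].
  subst z; have [l [[_ el] _ fl]] := cPz eps e0 0%N.
  by move: fl; rewrite ltNge el.
have [N HN] : exists N, forall l, P l -> (eL l < N)%N.
  apply: contrapT => H; apply: Pb => N; apply: contrapT => H2; apply: H.
  exists N => l Pl; rewrite ltnNge; apply/negP => Nl; apply: H2; by exists l.
have [m Hm] := TAF N.
exists (Kn m); split; first exact: Kn_fin.
move=> _ [l rl <-]; apply: bU; rewrite ballR distrC.
rewrite ltNge; apply/negP => el.
have := HN l (conj (FFDM FFF (Kn_fin m) rl) el).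
by rewrite ltnNge Hm.
Qed.

Lemma sep_pt (q : R) (s : seq R) : exists2 d, 0 < d &
  forall q', q' \in s -> q' != q -> d < `|q' - q|.
Proof.
elim: s => [|a s [d d0 Hd]]; first by exists 1.
have [->|aq] := eqVneq a q.
  exists d => // q'; rewrite inE => /orP[/eqP ->|]; first by rewrite eqxx.
  exact: Hd.
exists (Num.min d (`|a - q| / 2)).
  by rewrite lt_min d0 /= divr_gt0 // normr_gt0 subr_eq0.
move=> q'; rewrite inE => /orP[/eqP ->|q's q'q].
  move=> _; rewrite gt_min; apply/orP; right.
  by rewrite gtr_pMr ?normr_gt0 ?subr_eq0 // invf_lt1 // ltr1n.
by rewrite gt_min (Hd _ q's q'q).
Qed.

Lemma finclus (s : seq R) E : FF E -> (forall z, clus (rho E) z -> z \in s) -> False.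
Proof.
elim: s E => [|q s IH] E FFE Hs.
  by have [z [_ cz]] := BW (unb_rho FFE); have := Hs z cz.
have [d d0 Hd] := sep_pt q s.
pose A := [set l | rho E l /\ `|f l - q| < d / 2].
pose B := [set l | rho E l /\ ~ (`|f l - q| < d / 2)].
have rAB : rho E = A `|` B.
  apply/seteqP; split => [l rl|l [[]|[]]//].
  by have [h|h] := pselect (`|f l - q| < d / 2); [left|right].
have [E' FFE' [EA|EB]] := rhoR FFE rAB.
- apply: (single_clus FFE') => z cz.
  have zs := Hs z (clus_mono (subset_trans EA (fun l => @proj1 _ _)) cz).
  apply/eqP; apply: contrapT => /negP zq.
  move: zs; rewrite inE (negbTE zq) /= => zs.
  have dz := Hd z zs zq.
  have e0 : 0 < `|z - q| - d / 2.
    by rewrite subr_gt0 (lt_trans _ dz) // ltr_pdivrMr // ltr_pMr // ltr1n.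
  have [l [rl _ fl]] := cz _ e0 0%N.
  have [_ fq] := EA l rl.
  have : `|z - q| < `|z - q| - d / 2 + d / 2.
    apply: le_lt_trans (ler_distD (f l) z q) _.
    by apply: ltrD => //; rewrite distrC.
  by rewrite subrK ltxx.
- apply: (IH E' FFE') => z cz.
  have zs := Hs z (clus_mono (subset_trans EB (fun l => @proj1 _ _)) cz).
  move: zs; rewrite inE => /orP[/eqP zq|//]; subst z.
  have [l [rl _ fl]] := cz (d / 2) (divr_gt0 d0 (ltr0n _ 2)) 0%N.
  by have [_] := EB l rl.
Qed.

Lemma clus_inf E (s : seq R) : FF E -> exists z, clus (rho E) z /\ z \notin s.
Proof.
move=> FFE; apply: contrapT => H; apply: (finclus (s := s) FFE) => z cz.
apply: contrapT => /negP zs; apply: H; by exists z.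
Qed.



Lemma two_clus F : TA F -> exists q1 q2, q1 != q2 /\
  forall m, clus (rho (F `\` Kn m)) q1 /\ clus (rho (F `\` Kn m)) q2.
Proof.
move=> [FFF TAF].
pose G := filter_from [set: nat] (fun m => rho (F `\` Kn m)).
have GF : ProperFilter G.
  apply: filter_from_proper; last first.
    by move=> m _; apply: infinite_setN0; apply: rho_inf; apply: FFD (Kn_fin m).
  apply: filter_from_filter; first by exists 0%N.
  move=> i j _ _; exists (maxn i j) => //.
  have sub k : (k <= maxn i j)%N -> rho (F `\` Kn (maxn i j)) `<=` rho (F `\` Kn k).
    move=> km; apply: rhoM; [exact: FFD (Kn_fin _)|exact: FFD (Kn_fin _)|].
    by move=> w [Fw nw]; split => // /(Kn_mono km).
  by move=> l rl; split; [apply: (sub i (leq_maxl _ _))|apply: (sub j (leq_maxr _ _))].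
have Gin V : (forall l, V (f l)) -> (f @ G) V.
  by move=> HV; exists 0%N => // l _; apply: HV.
have G01 : (f @ G) `[0, 1]%classic.
  by apply: Gin => l; rewrite /= in_itv /=; exact: f01.
have cl_clus q : cluster (f @ G) q -> forall m, clus (rho (F `\` Kn m)) q.
  move=> clq m eps e0 N; have [m' Hm'] := TAF N.
  pose k := maxn m m'.
  have sub k' : (k' <= k)%N -> rho (F `\` Kn k) `<=` rho (F `\` Kn k').
    move=> km; apply: rhoM; [exact: FFD (Kn_fin _)|exact: FFD (Kn_fin _)|].
    by move=> w [Fw nw]; split => // /(Kn_mono km).
  have fA : (f @ G) (f @` rho (F `\` Kn k)) by exists k => // l Hl; exists l.
  have [_ [[l rl <-] bz]] := clq _ _ fA (nbhsx_ballx q eps e0).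
  exists l; split; first exact: (sub m (leq_maxl _ _)).
    by apply: Hm'; apply: (sub m' (leq_maxr _ _)).
  by rewrite distrC -ballR.
have [q1 [q101 clq1]] := segment_compact _ G01.
have [[q2 [clq2 q21]]|none] := pselect (exists q2, cluster (f @ G) q2 /\ q2 != q1).
  exists q1, q2; split; first by rewrite eq_sym.
  by move=> m; split; apply: cl_clus.
exfalso.
have cl1 : cluster (f @ G) = [set q1].
  apply/seteqP; split => [q clq|q -> //]; apply/eqP; apply: contrapT => /negP nq.
  by apply: none; exists q.
have nV : nbhs q1 `[-1, 2]%classic.
  apply/nbhs_ballP; exists 1 => //= z; rewrite ballR ltr_distlC => /andP[a b].
  rewrite /= in_itv /=; move: q101; rewrite /= in_itv /= => /andP[h0 h1].
  by apply/andP; split; lra.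
have V12 : (f @ G) `[-1, 2]%classic.
  apply: Gin => l; rewrite /= in_itv /=; have /andP[h0 h1] := f01 l.
  by apply/andP; split; lra.
have cv : f @ G --> q1.
  by apply: (@compact_cluster_set1 _ q1 (f @ G) `[-1,2]%classic) => //;
    exact: segment_compact.
apply: (fnc (y := q1) FFF); first by move: q101; rewrite /= in_itv.
move=> U nU; have [m _ Hm] := cv U nU.
exists (Kn m); split; first exact: Kn_fin.
by move=> _ [l rl <-]; apply: Hm.
Qed.



Definition gq (l : Lambda) : Q01 := exist _ (dy (eL l) (f l)) (dy01 (eL l) (f l)).

Lemma gq_inj : injective gq.
Proof. by move=> a b /(congr1 val) /= /dy_inj /eL_inj. Qed.

Lemma gq_approx l : `|q01r R (gq l) - f l| <= (eL l).+1%:R^-1.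
Proof. exact: dy_approx. Qed.



Section XF.
Variable F : set Omega.
Hypothesis TAF : TA F.
Let FFF : FF F := proj1 TAF.

Definition Pm m := rho (F `\` Kn m).
Let FFm m : FF (F `\` Kn m) := FFD FFF (Kn_fin m).

Definition q12 := cid (two_clus TAF).
Definition q1 := projT1 q12.
Definition q2q := cid (projT2 q12).
Definition q2 := projT1 q2q.
Lemma q12P : q1 != q2 /\ forall m, clus (Pm m) q1 /\ clus (Pm m) q2.
Proof. exact: (projT2 q2q). Qed.

Definition pickz m (s : seq R) : R := projT1 (cid (clus_inf s (FFm m))).
Lemma pickzP m s : clus (Pm m) (pickz m s) /\ pickz m s \notin s.
Proof. by rewrite /pickz; case: cid. Qed.

Fixpoint zl m : seq R := if m is m'.+1 then rcons (zl m') (pickz m' (zl m')) else [::].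
Definition z m := pickz m (zl m).

Lemma z_in k m : (k < m)%N -> z k \in zl m.
Proof.
elim: m => // m IH; rewrite ltnS leq_eqVlt => /orP[/eqP ->|km] /=.
  by rewrite mem_rcons inE eqxx.
by rewrite mem_rcons inE IH ?orbT.
Qed.

Lemma z_inj : injective z.
Proof.
move=> a b zab; apply/eqP; apply: contrapT => /negP ab.
have [/z_in|/z_in|] := ltngtP a b.
- by move=> H; have := (pickzP b (zl b)).2; rewrite -/(z b) -zab H.
- by move=> H; have := (pickzP a (zl a)).2; rewrite -/(z a) zab H.
- by move=> e; rewrite e eqxx in ab.
Qed.

Definition target m j := if (j %% 3 == 0)%N then z m
  else if (j %% 3 == 1)%N then q1 else q2.

Lemma target_clus m j : clus (Pm m) (target m j).
Proof.
rewrite /target; case: ifP => _; first exact: (pickzP m (zl m)).1.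
by case: ifP => _; [exact: (q12P.2 m).1|exact: (q12P.2 m).2].
Qed.

Lemma eps_pos (j : nat) : 0 < (j.+1%:R : R)^-1.
Proof. by rewrite invr_gt0 ltr0n. Qed.

Definition pickl m j N : Lambda :=
  projT1 (cid (target_clus m j (eps_pos j) N)).
Lemma picklP m j N : [/\ Pm m (pickl m j N), (N <= eL (pickl m j N))%N &
  `|f (pickl m j N) - target m j| < (j.+1%:R)^-1].
Proof. by rewrite /pickl; case: cid. Qed.

Fixpoint Bs k : nat := if k is k'.+1 then
  match pickle_inv k' with
  | Some p => maxn (Bs k') (eL (pickl p.1 p.2 (maxn (Bs k') p.2))).+1
  | None => (Bs k').+1 end
  else 0%N.

Lemma Bs_mono k k' : (k <= k')%N -> (Bs k <= Bs k')%N.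
Proof.
elim: k' => [|k' IH]; first by rewrite leqn0 => /eqP ->.
rewrite leq_eqVlt => /orP[/eqP ->//|]; rewrite ltnS => /IH kk.
apply: leq_trans kk _ => /=; case: pickle_inv => [p|]; last exact: leqnSn.
exact: leq_maxl.
Qed.

Definition lp (p : nat * nat) : Lambda := pickl p.1 p.2 (maxn (Bs (pickle p)) p.2).

Lemma lp_lt p : (eL (lp p) < Bs (pickle p).+1)%N.
Proof. by rewrite /= pickleK_inv /lp leq_max leqnn orbT. Qed.
Lemma lp_ge p : (Bs (pickle p) <= eL (lp p))%N /\ (p.2 <= eL (lp p))%N.
Proof. by have [_ + _] := picklP p.1 p.2 (maxn (Bs (pickle p)) p.2); rewrite geq_max => /andP. Qed.

Lemma lp_inj : injective lp.
Proof.
have key a b : (pickle a < pickle b)%N -> eL (lp a) != eL (lp b).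
  move=> ab; rewrite neq_ltn; apply/orP; left.
  apply: leq_trans (lp_lt a) _; apply: leq_trans (lp_ge b).1.
  exact: Bs_mono.
move=> a b e; apply: (pcan_inj (@pickleK _)); apply/eqP; apply: contrapT => /negP ne.
have [ab|ab|ab] := ltngtP (pickle a) (pickle b).
- by move: (key a b ab); rewrite e eqxx.
- by move: (key b a ab); rewrite e eqxx.
- by rewrite ab eqxx in ne.
Qed.

Definition xf (p : nat * nat) : Q01 := gq (lp p).

Lemma xf_inj : injective xf.
Proof. by move=> a b /gq_inj /lp_inj. Qed.

Lemma xf_row p : Pm p.1 (lp p).
Proof. by have [] := picklP p.1 p.2 (maxn (Bs (pickle p)) p.2). Qed.

Lemma xf_near p : `|q01r R (xf p) - target p.1 p.2| < 2 * (p.2.+1%:R)^-1.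
Proof.
have [_ _ h] := picklP p.1 p.2 (maxn (Bs (pickle p)) p.2).
have h2 := gq_approx (lp p).
have h3 : (eL (lp p)).+1%:R^-1 <= (p.2.+1%:R)^-1 :> R.
  by rewrite lef_pV2 ?posrE ?ltr0n // ler_nat ltnS (lp_ge p).2.
rewrite mulr2n mulrDl mul1r.
apply: le_lt_trans (ler_distD (f (lp p)) _ _) _.
by rewrite -/(lp p) in h; apply: ler_ltD (le_trans h2 h3) h.
Qed.

Lemma target1 m J : target m (J * 3).+1 = q1.
Proof. by rewrite /target -addn1 modnMDl. Qed.
Lemma target2 m J : target m (J * 3).+2 = q2.
Proof. by rewrite /target -addn2 modnMDl. Qed.
Lemma target0 m J : target m (J * 3) = z m.
Proof. by rewrite /target modnMl. Qed.

Lemma xf_i (p : R) : 0 <= p <= 1 -> exists U : set R, [/\ open U, U p &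
           forall n, ~ ((q01r R \o xf) @` tail_rows n `<=` U)].
Proof.
move=> _; have [q12 _] := q12P.
set D := `|q1 - q2|.
have D0 : 0 < D by rewrite normr_gt0 subr_eq0.
have d0 : 0 < D / 4 by rewrite divr_gt0.
exists (ball p (D / 4)); split; [exact: ball_open|exact: ballxx|].
move=> n sub; have [J HJ] := small_inv d0.
pose a := (n.+1, (J * 3).+1); pose b := (n.+1, (J * 3).+2).
have ha := xf_near a; have hb := xf_near b.
rewrite /= target1 in ha; rewrite /= target2 in hb.
have Ja : (J <= (J * 3).+1)%N by lia.
have Jb : (J <= (J * 3).+2)%N by lia.
have ha' := lt_trans ha (HJ _ Ja); have hb' := lt_trans hb (HJ _ Jb).
have pa : `|p - q01r R (xf a)| < D / 4.
  have : ball p (D / 4) (q01r R (xf a)).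
    by apply: sub; exists a => //; rewrite /tail_rows /=.
  by rewrite ballR.
have pb : `|p - q01r R (xf b)| < D / 4.
  have : ball p (D / 4) (q01r R (xf b)).
    by apply: sub; exists b => //; rewrite /tail_rows /=.
  by rewrite ballR.
set xa := q01r R (xf a) in ha' pa *; set xb := q01r R (xf b) in hb' pb *.
have e1 : `|q1 - q2| <= `|q1 - xa| + `|xa - q2| := ler_distD _ _ _.
have e2 : `|xa - q2| <= `|xa - p| + `|p - q2| := ler_distD _ _ _.
have e3 : `|p - q2| <= `|p - xb| + `|xb - q2| := ler_distD _ _ _.
have f1 : `|q1 - xa| = `|xa - q1| := distrC _ _.
have f2 : `|xa - p| = `|p - xa| := distrC _ _.
rewrite -/D in e1; lra.
Qed.

Lemma nat_event (P : nat -> Prop) : (\forall t \near \oo, P t) ->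
  exists N, forall t, (N <= t)%N -> P t.
Proof. by case=> N _ HN; exists N. Qed.

Lemma xf_iii n : ~ Defs.conv R (xf @` tail_rows n).
Proof.
move=> [k [s [scv scov]]].
pose ll i := projT1 (cid (scv i)).
have llP i : (fun t => q01r R (s i t)) @ \oo --> ll i by rewrite /ll; case: cid.
have [m [nm zm]] : exists m, (n < m)%N /\ forall i, z m != ll i.
  apply: contrapT => H.
  have H' r : exists i, z (n.+1 + r) = ll i.
    apply: contrapT => H2; apply: H; exists (n.+1 + r); split; first by rewrite ltnS leq_addr.
    by move=> i; apply/eqP => e; apply: H2; exists i.
  pose h (r : 'I_k.+1) : 'I_k := projT1 (cid (H' r)).
  have hinj : injective h.
    move=> r r' e; have := projT2 (cid (H' r)); have := projT2 (cid (H' r')).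
    rewrite -/(h r) -/(h r') e => <- /z_inj /eqP; rewrite eqn_add2l => /eqP.
    exact: val_inj.
  by have := leq_card h hinj; rewrite !card_ord ltnn.
have ei i : 0 < `|z m - ll i| / 2 by rewrite divr_gt0 // normr_gt0 subr_eq0 zm.
have Ti i : exists T, forall t, (T <= t)%N -> `|ll i - q01r R (s i t)| < `|z m - ll i| / 2.
  by apply: nat_event; move/cvgrPdist_lt: (llP i); apply.
pose T i := projT1 (cid (Ti i)).
have TP i t : (T i <= t)%N -> `|ll i - q01r R (s i t)| < `|z m - ll i| / 2.
  by rewrite /T; case: cid => ? H; apply: H.
pose Jx i := projT1 (cid (small_inv (ei i))).
have JP i j : (Jx i <= j)%N -> 2 * (j.+1%:R)^-1 < `|z m - ll i| / 2.
  by rewrite /Jx; case: cid => ? H; apply: H.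
pose TT := (\max_(i < k) T i)%N.
pose J0 := (\max_(i < k) Jx i)%N.
pose row (r : nat) := (m, ((J0 + r) * 3)%N).
have cov r : exists it : 'I_k * nat, s it.1 it.2 = xf (row r).
  have [i [t e]] := scov (xf (row r)) (ex_intro2 _ _ (row r) nm erefl).
  by exists (i, t).
pose it r := projT1 (cid (cov r)).
have itP r : s (it r).1 (it r).2 = xf (row r) by rewrite /it; case: cid.
have itT r : ((it r).2 < TT)%N.
  rewrite ltnNge; apply/negP; move: (itP r); case: (it r) => i t /= e Tt.
  have h1 := TP i t (leq_trans (leq_bigmax i) Tt).
  have h2 := xf_near (row r); rewrite /= target0 -e in h2.
  have h3 : (Jx i <= (J0 + r) * 3)%N.
    apply: leq_trans (leq_bigmax i) _; rewrite -/J0; lia.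
  have h4 := JP i _ h3.
  have e1 : `|z m - ll i| <= `|z m - q01r R (s i t)| + `|q01r R (s i t) - ll i|
    := ler_distD _ _ _.
  have f1 : `|z m - q01r R (s i t)| = `|q01r R (s i t) - z m| := distrC _ _.
  have f2 : `|q01r R (s i t) - ll i| = `|ll i - q01r R (s i t)| := distrC _ _.
  have : `|z m - ll i| < `|z m - ll i| / 2 + `|z m - ll i| / 2.
    rewrite f1 f2 in e1; apply: le_lt_trans e1 _.
    by apply: ltrD => //; apply: lt_trans h2 h4.
  by rewrite -splitr ltxx.
pose h (r : 'I_(k * TT).+1) : 'I_k * 'I_TT := ((it r).1, Ordinal (itT r)).
have hinj : injective h.
  move=> r r' [e1 e2].
  have : xf (row r) = xf (row r') by rewrite -!itP e1 e2.
  move=> /xf_inj [] /eqP; rewrite eqn_mul2r /= eqn_add2l => /eqP e.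
  exact: val_inj.
have := leq_card h hinj; rewrite card_prod !card_ord ltnn //.
Qed.

End XF.


Lemma xf_good F (TAF : TA F) : goodX R (xf TAF).
Proof. split; [exact: xf_i|exact: xf_inj|exact: xf_iii]. Qed.

Definition xX F (TAF : TA F) : Xset R := exist _ (xf TAF) (xf_good TAF).

Lemma nat_unb (S : set nat) : infinite_set S -> forall m, exists a, S a /\ (m <= a)%N.
Proof.
move=> iS m; apply: contrapT => H; apply: iS.
apply: (@sub_finite_set _ _ `I_m) => // a Sa /=; rewrite ltnNge; apply/negP => ma.
by apply: H; exists a.
Qed.

Lemma katetov_red : katetov_le (Fbar (@ADf R)) (rho01 (@ADf R)) FF rho.
Proof.
exists gq => F1 FF1.
have [F [FFF FF1s TAF]] := TA_ref FF1.
pose x := xX TAF.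
exists (ADf x `\` set0); first by exists x, set0; split => //; exact: finite_set0.
move=> K1 fK1; have [m Km] := fin_in_Kn fK1.
have [a [Axa ma]] := nat_unb (@ADf_inf R x) m.
exists [set a]; split; first exact: finite_set1.
move=> q [x' [K' [fK' e [p [[_ pab] <-]]]]].
have xx' : x' = x.
  apply: contrapT => ne; have := @ADf_fin R x x' (nesym ne).
  apply: (@sub_infinite_set _ (ADf x `\` set0 `\` [set a])).
    by move=> w h; split; [by case: h => [[]]|by rewrite e in h; case: h].
  by apply: infinite_setD; [apply: infinite_setD => //; exact: ADf_inf|exact: finite_set1].
subst x'.
have K'a : K' a.
  apply: contrapT => nK; have : (ADf x `\` K') a by [].
  by rewrite -e => -[_ /= ].
have ap := pab a (conj Axa K'a).
have mp : (m <= p.1)%N by apply: leq_trans ma (ltnW ap).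
exists (lp TAF p) => //.
have := xf_row TAF p; rewrite /Pm; apply: rhoM.
- exact: FFD FFF (Kn_fin _).
- exact: FFD FF1 fK1.
- move=> w [Fw nw]; split; first exact: FF1s.
  by move=> /Km /(Kn_mono mp).
Qed.

End PartB.

Lemma partB : (forall A : Xset R -> set nat, almost_disjoint A ->
          ~ katetov_le (Fbar A) (rho01 A) FF rho) ->
  FinBW_on FF rho [set x : R | 0 <= x <= 1].
Proof.
move=> H; apply: contrapT => nbw.
have [f [f01 fnc]] : exists f : Lambda -> R, (forall l, 0 <= f l <= 1) /\
    forall F y, FF F -> 0 <= y <= 1 -> ~ rho_converges rho f F y.
  apply: contrapT => H2; apply: nbw => f f01; apply: contrapT => H3.
  apply: H2; exists f; split => // F y FFF y01 cv; apply: H3.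
  by exists F => //; exists y.
apply: (H _ (@ADf_ad R)); exact: (katetov_red f01 fnc).
Qed.


Section D1.
Variable Y : pseudoMetricType R.
Hypothesis bwY : FinBW FF rho Y.

Lemma half_ball (y a b : Y) (e : R) : ball y (e / 2) a -> ball y (e / 2) b -> ball a e b.
Proof.
move=> ya yb; have := ball_triangle (ball_sym ya) yb.
by rewrite -splitr.
Qed.

Lemma totbdd (eps : R) : 0 < eps -> exists s : seq Y, forall y,
  exists2 c, c \in s & ball c eps y.
Proof.
move=> e0; apply: contrapT => H.
have H' (s : seq Y) : exists y : Y, forall c : Y, c \in s -> ~ ball c eps y.
  apply: contrapT => H2; apply: H; exists s => y.
  apply: contrapT => H3; apply: H2; exists y => c cs bc; apply: H3; by exists c.
pose next s := projT1 (cid (H' s)).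
have nextP s c : c \in s -> ~ ball c eps (next s) by rewrite /next; case: cid => y /=; apply.
pose fix pts n := if n is n'.+1 then rcons (pts n') (next (pts n')) else [::].
pose u n := next (pts n).
have u_in k n : (k < n)%N -> u k \in pts n.
  elim: n => // n IH; rewrite ltnS leq_eqVlt => /orP[/eqP ->|kn] /=.
    by rewrite mem_rcons inE eqxx.
  by rewrite mem_rcons inE IH ?orbT.
have sep k n : (k < n)%N -> ~ ball (u k) eps (u n) by move=> kn; apply: nextP; apply: u_in.
have [F FFF [y _ cv]] := bwY (f := fun l => u (eL l)) (fun l => I).
have e2 : 0 < eps / 2 by rewrite divr_gt0.
have [K [fK sub]] := cv _ (nbhsx_ballx y _ e2).
have iP := rho_inf (FFD FFF fK).
have [l1 r1] := infinite_setN0 iP.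
have [l2 [r2 n2]] := infinite_setN0 (infinite_setD iP (finite_set1 l1)).
have b1 : ball y (eps / 2) (u (eL l1)) by apply: sub; exists l1.
have b2 : ball y (eps / 2) (u (eL l2)) by apply: sub; exists l2.
have [lt|lt|eq] := ltngtP (eL l1) (eL l2).
- by apply: (sep _ _ lt); apply: half_ball b1 b2.
- by apply: (sep _ _ lt); apply: half_ball b2 b1.
- by apply: n2; apply: eL_inj.
Qed.

Lemma ultra_ball (U : set_system Y) : UltraFilter U -> forall (e : R) (s : seq Y),
  U [set y | exists2 c, c \in s & ball c e y] -> exists2 c, c \in s & U (ball c e).
Proof.
move=> UU e; elim => [|c s IH] Hs.
  exfalso; apply: (@filter_not_empty _ U _); apply: filterS Hs.
  by move=> y [c].
have [Uc|Unc] := in_ultra_setVsetC (ball c e) UU.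
  by exists c => //; rewrite inE eqxx.
have [c' c's Uc'] : exists2 c', c' \in s & U (ball c' e).
  apply: IH; apply: filterS (filterI Unc Hs).
  move=> y [nb [c'' ]]; rewrite inE => /orP[/eqP ->//|c''s] b; by exists c''.
by exists c' => //; rewrite inE c's orbT.
Qed.

Lemma finbw_compact : compact [set: Y].
Proof.
rewrite compact_ultra => U UU _.
have ctrE n : exists c, U (ball c (n.+1%:R^-1)).
  have [s Hs] := totbdd (eps_pos n).
  have [c _ Uc] := ultra_ball UU (s := s) (e := n.+1%:R^-1)
    (filterS (fun y _ => Hs y) filterT).
  by exists c.
pose ctr n := projT1 (cid (ctrE n)).
have ctrP n : U (ball (ctr n) (n.+1%:R^-1)) by rewrite /ctr; case: cid.
have [F FFF [y _ cv]] := bwY (f := fun l => ctr (eL l)) (fun l => I).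
exists y; split => // V /nbhs_ballP [e /= e0 bV].
have [N HN] := small_inv e0.
have e2 : 0 < e / 2 by rewrite divr_gt0.
have [K [fK sub]] := cv _ (nbhsx_ballx y _ e2).
have [l [rl Nl]] := inf_unbounded (rho_inf (FFD FFF fK)) N.
have yc : ball y (e / 2) (ctr (eL l)) by apply: sub; exists l.
apply: filterS (ctrP (eL l)) => w cw; apply: bV.
have := ball_triangle yc cw; apply: le_ball.
have h := HN _ Nl.
have h2 : (eL l).+1%:R^-1 <= e / 2 by rewrite ler_pdivlMr // mulrC; apply: ltW.
by rewrite [X in _ <= X](splitr e) lerD2l.
Qed.

End D1.


Lemma finbw_cantor : FinBW_on FF rho [set x : R | 0 <= x <= 1] ->
  FinBW FF rho cantor_space.
Proof.
move=> bw k _.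
have [F FFF [y y01 cv]] := bw (fun l => tern R (k l)) (fun l => tern01 R (k l)).
have cimg : compact (tern R @` [set: cantor_space]).
  apply: continuous_compact; last exact: cantor_space_compact.
  by apply: continuous_subspaceT => s; apply: tern_cont.
have climg := compact_closed (@Rhausdorff R) cimg.
have [s _ ys] : (tern R @` [set: cantor_space]) y.
  apply: climg => B nB; have [K [fK sub]] := cv B nB.
  have [l rl] := infinite_setN0 (rho_inf (FFD FFF fK)).
  by exists (tern R (k l)); split; [exists (k l)|apply: sub; exists l].
exists F => //; exists s => // V nV.
have [W [oW Ws] WV] : exists2 W, open_nbhs s W & W `<=` V by move: nV; rewrite nbhsE.
have cC : compact (~` W).
  apply: (subclosed_compact _ cantor_space_compact) => //.
  exact: open_closedC.
have clC := compact_closed (@Rhausdorff R) (continuous_compact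
  (continuous_subspaceT (fun s => @tern_cont R s)) cC).
have nC : nbhs y (~` (tern R @` (~` W))).
  apply: open_nbhs_nbhs; split; first by apply: closed_openC.
  by move=> [c nWc] e; apply: nWc; rewrite (tern_inj (etrans e (esym ys))).
have [K [fK sub]] := cv _ nC.
exists K; split => // _ [l rl <-]; apply: WV; apply: contrapT => nW.
by have := sub (tern R (k l)) (ex_intro2 _ _ l rl erefl); apply; exists (k l).
Qed.

Lemma compact_finbw (Y : pseudoMetricType R) : hausdorff_space Y ->
  compact [set: Y] -> FinBW_on FF rho [set x : R | 0 <= x <= 1] -> FinBW FF rho Y.
Proof.
move=> hY cY bw h _.
have [l0 _] : exists l0 : Lambda, True.
  have [l _] := infinite_setN0 (rho_inf (projT2 (cid FFne))).
  by exists l.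
have [p [cp sp]] := cantor_surj_Y (h l0) cY hY.
pose kk l := projT1 (cid (sp (h l))).
have kkP l : p (kk l) = h l by rewrite /kk; case: cid.
have [F FFF [s _ cv]] := finbw_cantor bw (f := kk) (fun l => I).
exists F => //; exists (p s) => // V nV.
have [K [fK sub]] := cv _ (cp s V nV).
exists K; split => // _ [l rl <-]; rewrite -kkP; apply: sub; by exists l.
Qed.


Definition I01 : set R := [set x : R | 0 <= x <= 1].

Lemma I01_hausdorff : hausdorff_space (set_type I01).
Proof.
move=> p q clpq; apply: val_inj; apply/eqP; apply: contrapT => /negP ne.
have d0 : 0 < `|val p - val q| / 2 by rewrite divr_gt0 // normr_gt0 subr_eq0.
have [w [pw qw]] := clpq _ _ (nbhsx_ballx p _ d0) (nbhsx_ballx q _ d0).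
have e1 : ball (val p) (`|val p - val q| / 2) (val w) := pw.
have e2 : ball (val q) (`|val p - val q| / 2) (val w) := qw.
rewrite ballR in e1; rewrite ballR in e2.
have t := ler_distD (val w) (val p) (val q).
rewrite (distrC (val w)) in t.
have : `|val p - val q| < `|val p - val q| by lra.
by rewrite ltxx.
Qed.

Lemma I01_compact : compact [set: set_type I01].
Proof.
move=> G GF _.
have G01 : G (val @^-1` `[0, 1]%classic).
  apply: filterS filterT => x _ /=; rewrite in_itv /=.
  by have := valP x; rewrite inE.
have [y [y01 cly]] := @segment_compact R 0 1 (val @ G) _ G01.
have yI : y \in I01 by rewrite inE; move: y01; rewrite /= in_itv.
exists (exist _ y yI); split => // A B GA /nbhs_ballP [e /= e0 bB].
have vA : G (val @^-1` (val @` A)) by apply: filterS GA => a Aa; exists a.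
have [_ [[a Aa <-] ya]] := cly _ _ vA (nbhsx_ballx y e e0).
by exists a; split => //; apply: bB.
Qed.

Lemma finbw_I01 : FinBW FF rho (set_type I01) -> FinBW_on FF rho I01.
Proof.
move=> bw f fI.
pose fY l : set_type I01 := exist _ (f l) (mem_set (fI l)).
have [F FFF [yY _ cv]] := bw fY (fun l => I).
exists F => //; exists (val yY); first by have := valP yY; rewrite inE.
move=> U /nbhs_ballP [e /= e0 bU].
have [K [fK sub]] := cv _ (nbhsx_ballx yY e e0).
exists K; split => // _ [l rl <-]; apply: bU.
have : ball yY e (fY l) by apply: sub; exists l.
by [].
Qed.

Lemma main_ctx :
  ((forall Y : pseudoMetricType R, hausdorff_space Y ->
      (FinBW FF rho Y <-> compact [set: Y]))
   <-> FinBW_on FF rho [set x : R | 0 <= x <= 1]) /\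
  (FinBW_on FF rho [set x : R | 0 <= x <= 1]
   <-> (forall A : Xset R -> set nat, almost_disjoint A ->
          ~ katetov_le (Fbar A) (rho01 A) FF rho)).
Proof.
split; split.
- move=> H; apply: finbw_I01; apply/(H _ I01_hausdorff); exact: I01_compact.
- move=> bw Y hY; split; first exact: finbw_compact.
  by move=> cY; apply: compact_finbw.
- exact: partA.
- exact: partB.
Qed.

End Ctx.

Unset Implicit Arguments.

Theorem theorem6p6 (R : realType) (Omega Lambda : Type)
    (FF : set (set Omega)) (rho : set Omega -> set Lambda) :
  countably_infinite Omega -> countably_infinite Lambda ->
  partition_regular FF rho ->
  ((forall Y : pseudoMetricType R, hausdorff_space Y ->
      (FinBW FF rho Y <-> compact [set: Y]))
   <-> FinBW_on FF rho [set x : R | 0 <= x <= 1]) /\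
  (FinBW_on FF rho [set x : R | 0 <= x <= 1]
   <-> (forall A : Xset R -> set nat, almost_disjoint A ->
          ~ katetov_le (Fbar A) (rho01 A) FF rho)).
Proof. by move=> cO cL PR; apply: main_ctx. Qed.
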